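(* Let $A\in\mathbb{R}^{m\times n}$, $b\in\mathbb{R}^m$, $f(x)=\frac12\|Ax-b\|^2$, let $L>0$ be a Lipschitz constant of $\nabla f$, $\lambda>0$, and $H(x)=f(x)+\lambda\|x\|_0$. Let $\{x_k\},\{y_k\}$ be generated by the VMEPIHT method with the choice of $H_k$ and $\alpha_k$ described in the context. Let $x^*$ be any cluster point of $\{x_k\}$ (so $x^*$ is a local minimizer of $H$), let $k_0$ be an index such that $I(y_k)=I(x_k)=I(x^* )$ for all $k\geq k_0$, and assume $\alpha_k>0$ for all $k\geq k_0$. Let $S=\{1,\dots,n\}\setminus I(x^* )$, let $Q$ be the principal submatrix of $A^TA$ indexed by $S$, and for $k\geq k_0$ let $H_k^*$ be the principal submatrix of $H_k$ indexed by $S$ and $d_k^*=-H_k^*(\nabla f(x_k))_S$. Then: (1) $\|x_k-x^*\|^2_{A^TA}$ and $\|y_k-x^*\|^2_{A^TA}$ ($k\ge k_0$) are non-increasing and tend to $0$; moreover, if $\|y_k-x^*\|^2_{A^TA}=0$ for some $k\geq k_0$, then $y_k$ is a local minimizer of $H$; (2) if there are constants $0<m\le M$ with $mI\preceq H_k\preceq MI$ for all $k$, then $\|x_k-x^*\|^2_{A^TA}$ converges to $0$ linearly, i.e. there is $c\in[0,1)$ with $\|x_{k+1}-x^*\|^2_{A^TA}\le c\,\|x_k-x^*\|^2_{A^TA}$ for all $k\ge k_0$; (3) if moreover $Q$ is positive definite and $\lim_{k\to\infty}\frac{\|((H_k^* )^{-1}-Q)d_k^*\|}{\|d_k^*\|}=0$,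 then $\|x_k-x^*\|$ converges to $0$ superlinearly, i.e. $\lim_{k\to\infty}\frac{\|x_{k+1}-x^*\|}{\|x_k-x^*\|}=0$.
   Context: $\|x\|_0$ is the number of nonzero components of $x$; for a symmetric positive semidefinite $B$, $\|v\|_B^2=v^TBv$. For $x\in\mathbb{R}^n$, $I(x):=\{i:x_i=0\}$; for an index set $I$, $C_I:=\{x: x_i=0\ \forall i\in I\}$; $P_C$ is the Euclidean projection onto $C$. For a vector $v$ and index set $S$, $v_S$ is the subvector of entries indexed by $S$. VMEPIHT method: fix $\mu>0$ and a starting point $y_0$. For $k=0,1,2,\dots$: choose $x_k\in\arg\min_x \lambda\|x\|_0+\frac L2\|x-y_k+\frac1L\nabla f(y_k)\|^2+\frac\mu2\|x-y_k\|^2$; then set $y_{k+1}=P_{C_{I(x_k)}}(x_k-\alpha_kH_k\nabla f(x_k))$ with $H_k,\alpha_k$ chosen as follows. Let $S_k=\{1,\dots,n\}\setminus I(x_k)$. $H_k$ is symmetric positive definite and block diagonal with respect to the splitting $S_k$, $I(x_k)$ (i.e. $(H_k)_{ij}=0$ whenever exactly one of $i,j$ lies in $S_k$); let $H_k^k$ be its principal submatrix indexed by $S_k$, $Q^k$ the principal submatrix of $A^TA$ indexed by $S_k$, $g_k=(\nabla f(x_k))_{S_k}$ and $d_k^k=-H_k^kg_k$. If $Q^kd_k^k=0$ set $\alpha_k=0$; otherwise $\alpha_k=\frac{-g_k^Td_k^k}{(d_k^k)^TQ^kd_k^k}$ (exact line search). Thus $y_{k+1}$ equals $x_k+\alpha_kd_k^k$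 on $S_k$ and $0$ elsewhere. *)

(* Defs.v *)
From HB Require Import structures.
From mathcomp Require Import all_boot all_order all_algebra.
From mathcomp Require Import all_classical all_reals topology normedtype sequences.
Set Implicit Arguments. Unset Strict Implicit. Unset Printing Implicit Defensive.
Import Order.TTheory GRing.Theory Num.Theory.
Local Open Scope ring_scope.

Section VMEPIHT.
Variable R : realType.

Definition sqn {p : nat} (v : 'cV[R]_p) : R := \sum_i (v i 0) ^+ 2.
Definition enorm {p : nat} (v : 'cV[R]_p) : R := Num.sqrt (sqn v).

Definition qform {p : nat} (B : 'M[R]_p) (v : 'cV[R]_p) : R := (v^T *m B *m v) 0 0.

Definition l0 {n : nat} (x : 'cV[R]_n) : nat := #|[set i | x i 0 != 0]|.

Definition fobj {m n : nat} (A : 'M[R]_(m, n)) (b : 'cV[R]_m) (x : 'cV[R]_n) : R :=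
  2^-1 * sqn (A *m x - b).
Definition gradf {m n : nat} (A : 'M[R]_(m, n)) (b : 'cV[R]_m) (x : 'cV[R]_n)
  : 'cV[R]_n := A^T *m (A *m x - b).

Definition Hobj {m n : nat} (A : 'M[R]_(m, n)) (b : 'cV[R]_m) (lam : R)
  (x : 'cV[R]_n) : R := fobj A b x + lam * (l0 x)%:R.

Definition Iz {n : nat} (x : 'cV[R]_n) : {set 'I_n} := [set i | x i 0 == 0].
Definition Sset {n : nat} (x : 'cV[R]_n) : {set 'I_n} := ~: Iz x.

(* Euclidean projection onto C_I = {x : x_i = 0 for all i in I}
   (closed form: zero out the coordinates in I) *)
Definition projC {n : nat} (I : {set 'I_n}) (z : 'cV[R]_n) : 'cV[R]_n :=
  \col_i (if i \in I then 0 else z i 0).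

Definition psub {n : nat} (S : {set 'I_n}) (M : 'M[R]_n) : 'M[R]_#|S| :=
  \matrix_(i, j) M (enum_val i) (enum_val j).
Definition subv {n : nat} (S : {set 'I_n}) (v : 'cV[R]_n) : 'cV[R]_#|S| :=
  \col_i v (enum_val i) 0.

Definition spd {p : nat} (M : 'M[R]_p) : Prop :=
  M^T = M /\ forall v : 'cV[R]_p, v != 0 -> 0 < qform M v.

Definition block_diag {n : nat} (S : {set 'I_n}) (M : 'M[R]_n) : Prop :=
  forall i j, (i \in S) != (j \in S) -> M i j = 0.

(* exact line-search step size of the context *)
Definition alpha_rule {m n : nat} (A : 'M[R]_(m, n)) (b : 'cV[R]_m)
  (x : 'cV[R]_n) (H : 'M[R]_n) : R :=
  let S := Sset x in
  let g := subv S (gradf A b x) in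
  let d := - (psub S H *m g) in
  let Q := psub S (A^T *m A) in
  if Q *m d == 0 then 0 else - (g^T *m d) 0 0 / (d^T *m Q *m d) 0 0.

Definition iht_sub {m n : nat} (A : 'M[R]_(m, n)) (b : 'cV[R]_m) (L lam mu : R)
  (y z : 'cV[R]_n) : R :=
  lam * (l0 z)%:R + L / 2 * sqn (z - y + L^-1 *: gradf A b y)
  + mu / 2 * sqn (z - y).

Definition vmepiht {m n : nat} (A : 'M[R]_(m, n)) (b : 'cV[R]_m) (L lam mu : R)
  (Hs : nat -> 'M[R]_n) (alpha : nat -> R) (x y : nat -> 'cV[R]_n) : Prop :=
  forall k,
    (forall z, iht_sub A b L lam mu (y k) (x k) <= iht_sub A b L lam mu (y k) z)
    /\ spd (Hs k) /\ block_diag (Sset (x k)) (Hs k)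
    /\ alpha k = alpha_rule A b (x k) (Hs k)
    /\ y k.+1 = projC (Iz (x k)) (x k - alpha k *: (Hs k *m gradf A b (x k))).

Definition cluster_pt {n : nat} (x : nat -> 'cV[R]_n) (xs : 'cV[R]_n) : Prop :=
  forall e : R, 0 < e -> forall N : nat, exists k, (N <= k)%N /\ enorm (x k - xs) < e.

Definition local_min {n : nat} (F : 'cV[R]_n -> R) (x : 'cV[R]_n) : Prop :=
  exists2 d : R, 0 < d & forall z, enorm (z - x) < d -> F x <= F z.

End VMEPIHT.

(* Main.v *)
Require Import Defs.
From HB Require Import structures.
From mathcomp Require Import all_boot all_order all_algebra.
From mathcomp Require Import all_classical all_reals topology normedtype sequences.
From mathcomp Require Import ring lra.
Import Order.TTheory GRing.Theory Num.Theory numFieldNormedType.Exports.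
Local Open Scope ring_scope.
Set Implicit Arguments. Unset Strict Implicit. Unset Printing Implicit Defensive.

Section Lin.
Variable R : realType.
Implicit Types (p q : nat).

Definition bil p (M : 'M[R]_p) (u v : 'cV[R]_p) : R := (u^T *m M *m v) 0 0.

Lemma bilDl p (M : 'M[R]_p) u w v : bil M (u + w) v = bil M u v + bil M w v.
Proof. by rewrite /bil linearD /= !mulmxDl mxE. Qed.
Lemma bilDr p (M : 'M[R]_p) u w v : bil M v (u + w) = bil M v u + bil M v w.
Proof. by rewrite /bil !mulmxDr mxE. Qed.
Lemma bilZl p (M : 'M[R]_p) a u v : bil M (a *: u) v = a * bil M u v.
Proof. by rewrite /bil linearZ /= -!scalemxAl mxE. Qed.
Lemma bilZr p (M : 'M[R]_p) a u v : bil M v (a *: u) = a * bil M v u.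
Proof. by rewrite /bil -!scalemxAr mxE. Qed.
Lemma bilNl p (M : 'M[R]_p) u v : bil M (- u) v = - bil M u v.
Proof. by rewrite -scaleN1r bilZl mulN1r. Qed.
Lemma bilNr p (M : 'M[R]_p) u v : bil M v (- u) = - bil M v u.
Proof. by rewrite -scaleN1r bilZr mulN1r. Qed.
Lemma bilBl p (M : 'M[R]_p) u w v : bil M (u - w) v = bil M u v - bil M w v.
Proof. by rewrite bilDl bilNl. Qed.
Lemma bilBr p (M : 'M[R]_p) u w v : bil M v (u - w) = bil M v u - bil M v w.
Proof. by rewrite bilDr bilNr. Qed.
Lemma bil_tr p (M : 'M[R]_p) u v : bil M u v = bil M^T v u.
Proof.
have E : forall N : 'M[R]_1, N 0 0 = N^T 0 0 by move=> N; rewrite mxE.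
by rewrite /bil E !trmx_mul trmxK mulmxA.
Qed.
Lemma bil_sym p (M : 'M[R]_p) u v : M^T = M -> bil M u v = bil M v u.
Proof. by move=> sM; rewrite bil_tr sM. Qed.
Lemma bilMr p (M N : 'M[R]_p) u v : bil M u (N *m v) = bil (M *m N) u v.
Proof. by rewrite /bil !mulmxA. Qed.
Lemma bilMl p (M N : 'M[R]_p) u v : bil M (N *m u) v = bil (N^T *m M) u v.
Proof. by rewrite /bil trmx_mul !mulmxA. Qed.
Lemma qformE p (M : 'M[R]_p) v : qform M v = bil M v v.
Proof. by []. Qed.
Lemma sqnE p (v : 'cV[R]_p) : sqn v = bil 1%:M v v.
Proof.
rewrite /bil /sqn mulmx1 mxE; apply: eq_bigr => i _.
by rewrite mxE expr2.
Qed.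
Lemma sqn_ge0 p (v : 'cV[R]_p) : 0 <= sqn v.
Proof. by apply: sumr_ge0 => i _; rewrite sqr_ge0. Qed.
Lemma sqn_eq0 p (v : 'cV[R]_p) : sqn v = 0 -> v = 0.
Proof.
move=> /eqP; rewrite /sqn psumr_eq0 => [/allP H|i _]; last by rewrite sqr_ge0.
apply/matrixP => i j; rewrite ord1 mxE.
have := H i (mem_index_enum _); rewrite sqrf_eq0 => /eqP; done.
Qed.
End Lin.

Section CS.
Variable R : realType.

Lemma discr (a b c : R) : 0 <= c -> (forall t, 0 <= a + 2 * b * t + c * t ^+ 2) ->
  b ^+ 2 <= a * c.
Proof.
move=> c0 H; have [cz|cp] := eqVneq c 0.
  have [bz|bn] := eqVneq b 0; first by rewrite bz cz; lra.
  have := H (- (a + 1) / (2 * b)); rewrite cz mul0r addr0.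
  have -> : 2 * b * (- (a + 1) / (2 * b)) = - (a + 1).
    by field.
  lra.
have cp' : 0 < c by rewrite lt_def cp c0.
have := H (- b / c).
have -> : a + 2 * b * (- b / c) + c * (- b / c) ^+ 2 = a - b ^+ 2 / c.
  by field.
rewrite subr_ge0 ler_pdivrMr //; lra.
Qed.

Lemma CS_form p (M : 'M[R]_p) u v : M^T = M -> (forall w, 0 <= qform M w) ->
  bil M u v ^+ 2 <= qform M u * qform M v.
Proof.
move=> sM psd; apply: discr => // t.
have := psd (u + t *: v); rewrite qformE !(bilDl, bilDr, bilZl, bilZr).
rewrite (bil_sym v u sM) !qformE; lra.
Qed.

Lemma bil1E p (u v : 'cV[R]_p) : bil 1%:M u v = \sum_i u i 0 * v i 0.
Proof. by rewrite /bil mulmx1 mxE; apply: eq_bigr => i _; rewrite mxE. Qed.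

Lemma psd1 p (w : 'cV[R]_p) : 0 <= qform 1%:M w.
Proof. by rewrite qformE -sqnE sqn_ge0. Qed.

Lemma CS p (u v : 'cV[R]_p) : bil 1%:M u v ^+ 2 <= sqn u * sqn v.
Proof. by rewrite !sqnE; apply: CS_form => //; [rewrite trmx1 | apply: psd1]. Qed.

Lemma mx_bound p q (M : 'M[R]_(p, q)) : exists K, 0 <= K /\
  forall v, sqn (M *m v) <= K * sqn v.
Proof.
exists (\sum_i sqn (\col_j M i j)); split.
  by apply: sumr_ge0 => i _; apply: sqn_ge0.
move=> v; rewrite /sqn mulr_suml; apply: ler_sum => i _.
have := CS (\col_j M i j) v; rewrite bil1E /sqn.
by under eq_bigr do rewrite mxE; rewrite mxE.
Qed.

Lemma sq_le_bound (x K s : R) : 0 <= K -> 0 <= s -> x ^+ 2 <= K * s ^+ 2 ->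
  x <= (K + 1) * s.
Proof.
move=> K0 s0 H; rewrite leNgt; apply/negP => hx.
have h1 : 0 <= (K + 1) * s by apply: mulr_ge0 => //; lra.
have h2 : ((K + 1) * s) ^+ 2 < x ^+ 2.
  by rewrite ltr_pXn2r // nnegrE; lra.
have h3 : K * s ^+ 2 <= ((K + 1) * s) ^+ 2.
  rewrite exprMn ler_wpM2r ?sqr_ge0 //; nra.
lra.
Qed.

Lemma pinv_bound p (Q : 'M[R]_p) : Q^T = Q -> exists K, 0 <= K /\
  forall v, qform Q v <= K * sqn (Q *m v).
Proof.
move=> sQ; have [K [K0 HK]] := mx_bound (pinvmx Q).
exists (K + 1); split; first lra.
move=> v; have E : Q = Q *m pinvmx Q *m Q by rewrite mulmxKpV.
rewrite qformE {1}E -bilMr -{1}sQ -bilMl.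
have h1 : bil (pinvmx Q) (Q *m v) (Q *m v) = bil 1%:M (Q *m v) (pinvmx Q *m (Q *m v)).
  by rewrite [RHS]bilMr mul1mx.
rewrite h1; apply: sq_le_bound => //; first exact: sqn_ge0.
apply: le_trans (CS _ _) _.
have := HK (Q *m v); have := sqn_ge0 (Q *m v); nra.
Qed.

End CS.

Section Sub.
Variable R : realType.
Variable n : nat.
Variable S : {set 'I_n}.

Definition Pm : 'M[R]_(#|S|, n) := \matrix_(j, i) ((enum_val j == i)%:R).

Lemma sum_delta (T : finType) (a : T) (F : T -> R) :
  \sum_i ((a == i)%:R * F i) = F a.
Proof.
rewrite (bigD1 a) //= eqxx mul1r big1 ?addr0 // => i /negbTE.
by rewrite eq_sym => ->; rewrite mul0r.
Qed.

Lemma PmE (v : 'cV[R]_n) j : (Pm *m v) j 0 = v (enum_val j) 0.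
Proof. by rewrite mxE; under eq_bigr do rewrite mxE; rewrite sum_delta. Qed.

Lemma subvE (v : 'cV[R]_n) : subv S v = Pm *m v.
Proof. by apply/matrixP => j k; rewrite ord1 mxE PmE. Qed.


Lemma PmTE0 (u : 'cV[R]_#|S|) i : i \notin S -> (Pm^T *m u) i 0 = 0.
Proof.
move=> iS; rewrite mxE big1 // => j _; rewrite !mxE.
have : enum_val j != i by apply: contraNneq iS => <-; apply: enum_valP.
by move/negbTE => ->; rewrite mul0r.
Qed.

Lemma PmTE1 (u : 'cV[R]_#|S|) i (iS : i \in S) :
  (Pm^T *m u) i 0 = u (enum_rank_in iS i) 0.
Proof.
rewrite mxE (bigD1 (enum_rank_in iS i)) //= big1 ?addr0.
  by rewrite !mxE enum_rankK_in // eqxx mul1r.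
move=> j hj; rewrite !mxE.
have : enum_val j != i.
  apply: contra hj => /eqP ej; apply/eqP.
  by rewrite -[j](enum_valK_in iS) ej.
by move/negbTE => ->; rewrite mul0r.
Qed.

Lemma PmPmT : Pm *m Pm^T = 1%:M.
Proof.
apply/matrixP => j k; rewrite mxE [RHS]mxE.
under eq_bigr do rewrite !mxE.
rewrite (eq_bigr (fun i => (enum_val j == i)%:R * (enum_val k == i)%:R)); last first.
  by move=> i _.
rewrite sum_delta; case: (eqVneq j k) => [->|jk]; first by rewrite eqxx.
have : enum_val k != enum_val j by apply: contra jk => /eqP /enum_val_inj ->.
by move/negbTE => ->.
Qed.

Lemma PmTPm (v : 'cV[R]_n) : Pm^T *m (Pm *m v) = projC (~: S) v.
Proof.
apply/matrixP => i k; rewrite ord1 [RHS]mxE finset.in_setC.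
case: (boolP (i \in S)) => iS /=; last by rewrite PmTE0.
by rewrite PmTE1 PmE enum_rankK_in.
Qed.

Definition supp (v : 'cV[R]_n) := forall i, i \notin S -> v i 0 = 0.

Lemma projC_supp (v : 'cV[R]_n) : supp v -> projC (~: S) v = v.
Proof.
move=> sv; apply/matrixP => i k; rewrite ord1 mxE finset.in_setC.
by case: (boolP (i \in S)) => iS //=; rewrite sv.
Qed.

Lemma liftPmK (v : 'cV[R]_n) : supp v -> Pm^T *m (Pm *m v) = v.
Proof. by move=> sv; rewrite PmTPm projC_supp. Qed.

Lemma supp_lift (u : 'cV[R]_#|S|) : supp (Pm^T *m u).
Proof. by move=> i iS; rewrite PmTE0. Qed.

Lemma Pm_projC (v : 'cV[R]_n) : Pm *m projC (~: S) v = Pm *m v.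
Proof. by rewrite -PmTPm mulmxA PmPmT mul1mx. Qed.

Lemma psubE (M : 'M[R]_n) : psub S M = Pm *m M *m Pm^T.
Proof.
apply/matrixP => j k; rewrite mxE -mulmxA.
have -> : (Pm *m (M *m Pm^T)) j k = (Pm *m col k (M *m Pm^T)) j 0.
  by rewrite !mxE; apply: eq_bigr => i _; rewrite !mxE.
rewrite PmE mxE mxE; under eq_bigr do rewrite !mxE.
rewrite (eq_bigr (fun l => (enum_val k == l)%:R * M (enum_val j) l)).
  by rewrite sum_delta.
by move=> l _; rewrite mulrC.
Qed.

Lemma bilMM p q (M : 'M[R]_p) (N : 'M[R]_(p, q)) u v :
  bil M (N *m u) (N *m v) = bil (N^T *m M *m N) u v.
Proof. by rewrite /bil trmx_mul !mulmxA. Qed.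

Lemma sqn_lift (u : 'cV[R]_#|S|) : sqn (Pm^T *m u) = sqn u.
Proof. by rewrite !sqnE bilMM trmxK mulmx1 PmPmT. Qed.

Lemma qform_lift (M : 'M[R]_n) (u : 'cV[R]_#|S|) :
  qform M (Pm^T *m u) = qform (psub S M) u.
Proof. by rewrite !qformE bilMM trmxK psubE. Qed.

Lemma qform_supp (M : 'M[R]_n) (v : 'cV[R]_n) : supp v ->
  qform M v = qform (psub S M) (subv S v).
Proof. by move=> sv; rewrite subvE -qform_lift liftPmK. Qed.

Lemma sqn_supp (v : 'cV[R]_n) : supp v -> sqn v = sqn (subv S v).
Proof. by move=> sv; rewrite subvE -sqn_lift liftPmK. Qed.

Lemma sqn_subv (v : 'cV[R]_n) : sqn (subv S v) <= sqn v.
Proof.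
rewrite /sqn.
under eq_bigr do rewrite mxE.
rewrite -(big_enum_val (fun i => v i 0 ^+ 2)) /= big_mkcond /=.
by apply: ler_sum => i _; case: ifP => // _; apply: sqr_ge0.
Qed.

Lemma block_subv (H : 'M[R]_n) (g : 'cV[R]_n) : block_diag S H ->
  subv S (H *m g) = psub S H *m subv S g.
Proof.
move=> bd; rewrite !subvE psubE -!mulmxA PmTPm.
apply/matrixP => j k; rewrite ord1 !PmE !mxE; apply: eq_bigr => i _.
rewrite mxE finset.in_setC; case: (boolP (i \in S)) => iS //=.
rewrite bd ?mul0r //; by rewrite enum_valP iS.
Qed.

End Sub.

Section Gen.
Variable R : realType.

Lemma s_le (s c : R) : 0 <= s -> 0 <= c -> s ^+ 2 <= c * s -> s <= c.
Proof.
move=> s0 c0 H; have [->|sn] := eqVneq s 0; first by [].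
have sp : 0 < s by rewrite lt_def sn s0.
by rewrite -(ler_pM2r sp) -expr2.
Qed.

Lemma sqnD2 p (a b : 'cV[R]_p) : sqn (a + b) <= 2 * sqn a + 2 * sqn b.
Proof.
have h := sqn_ge0 (a - b); move: h.
rewrite !sqnE !(bilDl, bilDr, bilNl, bilNr) (bil_sym b a) ?trmx1 //; lra.
Qed.

Lemma bil1M p (Q : 'M[R]_p) u v : bil 1%:M u (Q *m v) = bil Q u v.
Proof. by rewrite bilMr mul1mx. Qed.

Lemma bil1Ml p (Q : 'M[R]_p) u v : Q^T = Q -> bil 1%:M (Q *m u) v = bil Q u v.
Proof. by move=> sQ; rewrite bilMl mulmx1 sQ. Qed.

Lemma qform_leL p (Q : 'M[R]_p) (L : R) v : Q^T = Q -> (forall w, 0 <= qform Q w) ->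
  0 <= L -> (forall w, sqn (Q *m w) <= L ^+ 2 * sqn w) -> qform Q v <= L * sqn v.
Proof.
move=> sQ psd L0 HL.
have h := CS v (Q *m v); rewrite bil1M -qformE in h.
have h2 := HL v; have h3 := sqn_ge0 v; have h4 := psd v.
have h5 : qform Q v ^+ 2 <= (L * sqn v) ^+ 2.
  apply: le_trans h _; rewrite exprMn expr2 mulrA; nra.
rewrite -ler_sqr ?nnegrE //; exact: mulr_ge0.
Qed.

Lemma sqnM_le p (H : 'M[R]_p) (c : R) v : H^T = H -> (forall w, 0 <= qform H w) ->
  0 <= c -> (forall w, qform H w <= c * sqn w) ->
  sqn (H *m v) <= c * qform H v.
Proof.
move=> sH psd c0 Hc.
have h := CS_form v (H *m v) sH psd.
have e1 : bil H v (H *m v) = sqn (H *m v).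
  by rewrite sqnE bil1Ml // bil1M.
rewrite e1 in h.
apply: s_le; [exact: sqn_ge0 | exact: mulr_ge0 | ].
apply: le_trans h _; rewrite [c * _ * _]mulrC mulrA.
have := Hc (H *m v); have := psd v; have := sqn_ge0 (H *m v); nra.
Qed.

Lemma sqnM_le2 p (H : 'M[R]_p) (c : R) v : H^T = H -> (forall w, 0 <= qform H w) ->
  0 <= c -> (forall w, qform H w <= c * sqn w) ->
  sqn (H *m v) <= c ^+ 2 * sqn v.
Proof.
move=> sH psd c0 Hc; apply: le_trans (sqnM_le v sH psd c0 Hc) _.
by have := Hc v; rewrite expr2 -mulrA; apply: ler_wpM2l.
Qed.

Lemma spd_unit p (H : 'M[R]_p) : H^T = H -> (forall v, v != 0 -> 0 < qform H v) ->
  H \in unitmx.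
Proof.
move=> sH pd; rewrite unitmxE unitfE; apply/negP => /det0P [v vn vH].
have := pd v^T; rewrite trmx_eq0 => /(_ vn).
by rewrite qformE /bil trmxK vH mul0mx mxE ltxx.
Qed.

End Gen.

Section Red.
Variable R : realType.
Variable p : nat.
Variables (Q : 'M[R]_p) (L t : R) (gam : 'cV[R]_p).
Hypothesis sQ : Q^T = Q.
Hypothesis psdQ : forall w, 0 <= qform Q w.
Hypothesis L0 : 0 < L.
Hypothesis QL : forall w, sqn (Q *m w) <= L ^+ 2 * sqn w.
Hypothesis t0 : 0 < t.
Hypothesis tL : t * L <= 1.
Variables (eps eta : nat -> 'cV[R]_p) (Hk : nat -> 'M[R]_p) (al : nat -> R) (k0 : nat).
Definition Gr (e : 'cV[R]_p) := Q *m e + gam.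
Definition dr k := - (Hk k *m Gr (eps k)).
Hypothesis hx : forall k, (k0 <= k)%N -> eps k = eta k - t *: Gr (eta k).
Hypothesis hy : forall k, (k0 <= k)%N -> eta k.+1 = eps k + al k *: dr k.
Hypothesis hal : forall k, (k0 <= k)%N ->
  al k = - bil 1%:M (Gr (eps k)) (dr k) / qform Q (dr k).
Hypothesis hpos : forall k, (k0 <= k)%N -> 0 < al k.
Hypothesis hcl : forall del, 0 < del -> forall N, exists k, (N <= k)%N /\ sqn (eps k) < del.

Definition Fr (e : 'cV[R]_p) := qform Q e / 2 + bil 1%:M gam e.

Lemma qL v : qform Q v <= L * sqn v.
Proof. by apply: qform_leL => //; exact: ltW. Qed.

Lemma Fr_expand e v : Fr (e + v) = Fr e + bil 1%:M (Gr e) v + qform Q v / 2.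
Proof.
rewrite /Fr /Gr !qformE !(bilDl, bilDr) (bil_sym v e sQ) bil1Ml //; lra.
Qed.

Lemma Fr_grad e : Fr (e - t *: Gr e) <= Fr e - t / 2 * sqn (Gr e).
Proof.
rewrite Fr_expand bilNr bilZr qformE bilNl bilNr bilZl bilZr.
have -> : bil 1%:M (Gr e) (Gr e) = sqn (Gr e) by rewrite sqnE.
rewrite -qformE.
have h := qL (Gr e); have h2 := sqn_ge0 (Gr e).
have h3 : t * t * qform Q (Gr e) <= t * sqn (Gr e).
  have h4 : t * t * qform Q (Gr e) <= t * t * (L * sqn (Gr e)).
    by apply: ler_wpM2l => //; apply: mulr_ge0; apply: ltW.
  apply: le_trans h4 _.
  have -> : t * t * (L * sqn (Gr e)) = t * ((t * L) * sqn (Gr e)) by ring.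
  apply: ler_wpM2l; first exact: ltW.
  by rewrite -[X in _ <= X]mul1r; apply: ler_wpM2r.
lra.
Qed.

Lemma q_ne0 k : (k0 <= k)%N -> qform Q (dr k) != 0.
Proof.
move=> hk; apply/negP => /eqP hq; have := hpos hk; rewrite (hal hk) hq invr0 mulr0.
by rewrite ltxx.
Qed.

Lemma Fr_ls k : (k0 <= k)%N -> Fr (eta k.+1) <= Fr (eps k).
Proof.
move=> hk; rewrite (hy hk) Fr_expand bilZr qformE bilZl bilZr -qformE.
have hq := q_ne0 hk; have ha := hal hk.
have e1 : al k * qform Q (dr k) = - bil 1%:M (Gr (eps k)) (dr k).
  by rewrite ha mulrAC -mulrA divff // mulr1.
have h2 : 0 <= qform Q (dr k) := psdQ _.
have h3 := hpos hk.
have -> : al k * bil 1%:M (Gr (eps k)) (dr k) = - (al k * (al k * qform Q (dr k))).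
  by rewrite e1; ring.
have : 0 <= al k * (al k * qform Q (dr k)).
  by apply: mulr_ge0; [exact: ltW | apply: mulr_ge0 => //; exact: ltW].
lra.
Qed.

Lemma Fr_dec k : (k0 <= k)%N ->
  Fr (eps k.+1) <= Fr (eps k) - t / 2 * sqn (Gr (eta k.+1)).
Proof.
move=> hk; rewrite (hx (leqW hk)); apply: le_trans (Fr_grad _) _.
have := Fr_ls hk; lra.
Qed.

Lemma Fr_dec1 k : (k0 <= k)%N -> Fr (eps k.+1) <= Fr (eps k).
Proof.
move=> hk; apply: le_trans (Fr_dec hk) _.
have : 0 <= t / 2 * sqn (Gr (eta k.+1)) by apply: mulr_ge0; [apply: divr_ge0; [exact: ltW | by []] | exact: sqn_ge0].
lra.
Qed.

Lemma Fr_mono k k' : (k0 <= k)%N -> (k <= k')%N -> Fr (eps k') <= Fr (eps k).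
Proof.
move=> hk /subnK <-; elim: (k' - k)%N => [|j IH]; first by rewrite add0n.
rewrite addSn; apply: le_trans (Fr_dec1 _) IH.
by apply: leq_trans hk (leq_addl _ _).
Qed.

Lemma sqnN (v : 'cV[R]_p) : sqn (- v) = sqn v.
Proof. by rewrite !sqnE bilNl bilNr opprK. Qed.

Lemma bil_lb (a b : 'cV[R]_p) : - (sqn a + sqn b) / 2 <= bil 1%:M a b.
Proof.
have := sqn_ge0 (a + b); rewrite !sqnE !(bilDl, bilDr) (bil_sym b a) ?trmx1 //.
lra.
Qed.

Lemma GrE e v : Gr (e - t *: v) = Gr e - t *: (Q *m v).
Proof. by rewrite /Gr mulmxBr scalemxAr; apply/matrixP => i j; rewrite !mxE; lra. Qed.

Lemma gam0 : gam = 0.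
Proof.
apply/eqP; apply/negPn/negP => gn.
set sg := sqn gam.
have sgp : 0 < sg.
  rewrite lt_def sqn_ge0 andbT; apply/negP => /eqP /sqn_eq0 g0.
  by rewrite g0 eqxx in gn.
have lb : forall k, (k0 <= k)%N -> -(sg + 1) / 2 <= Fr (eps k).
  move=> k hk; have [k' [hk' hs]] := hcl ltr01 k.
  apply: le_trans (Fr_mono hk hk').
  rewrite /Fr; have := psdQ (eps k'); have := bil_lb gam (eps k'); rewrite -/sg; lra.
have [K1 [K1p HK1]] := mx_bound (1%:M - t *: Q).
have GG : forall k, (k0 <= k)%N -> Gr (eps k) = (1%:M - t *: Q) *m Gr (eta k).
  by move=> k hk; rewrite (hx hk) GrE mulmxBl mul1mx -scalemxAl.
have K1p' : 0 < K1 + 1 by lra.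
set D := t / 2 * (sg / (4 * (K1 + 1))).
have Dp : 0 < D.
  apply: mulr_gt0; first by apply: divr_gt0.
  by apply: divr_gt0 => //; apply: mulr_gt0.
have L2p : 0 < L ^+ 2 by apply: exprn_gt0.
have step : forall k, (k0 <= k)%N ->
    exists k', (k0 <= k')%N /\ Fr (eps k') <= Fr (eps k) - D.
  move=> k hk.
  have dp : 0 < sg / (4 * L ^+ 2) by apply: divr_gt0 => //; apply: mulr_gt0.
  have [[|k'] [hk' hs]] := hcl dp k.+1; first by [].
  have hkk : (k <= k')%N by [].
  have hk0 : (k0 <= k')%N by apply: leq_trans hk hkk.
  exists k'.+1; split; first by apply: leqW.
  have h1 := Fr_dec hk0; have h2 := Fr_mono hk hkk.
  have hZ : sqn (Q *m eps k'.+1) < sg / 4.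
    apply: le_lt_trans (QL _) _.
    have -> : sg / 4 = L ^+ 2 * (sg / (4 * L ^+ 2)).
      by field; apply: lt0r_neq0.
    by rewrite ltr_pM2l.
  have hgam : gam = Gr (eps k'.+1) + - (Q *m eps k'.+1).
    by rewrite /Gr addrC addKr.
  have hsg : sg <= 2 * sqn (Gr (eps k'.+1)) + 2 * sqn (Q *m eps k'.+1).
    by rewrite /sg {1}hgam; apply: le_trans (sqnD2 _ _) _; rewrite sqnN.
  have hY := HK1 (Gr (eta k'.+1)); rewrite -GG in hY; last by apply: leqW.
  have hX := sqn_ge0 (Gr (eta k'.+1)).
  have hX2 : sg / (4 * (K1 + 1)) <= sqn (Gr (eta k'.+1)).
    rewrite ler_pdivrMr; last by apply: mulr_gt0.
    nra.
  have : D <= t / 2 * sqn (Gr (eta k'.+1)).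
    by apply: ler_wpM2l => //; apply: divr_ge0 => //; exact: ltW.
  lra.
have iter : forall j : nat, exists k, (k0 <= k)%N /\ Fr (eps k) <= Fr (eps k0) - j%:R * D.
  elim => [|j [k [hk h]]]; first by exists k0; rewrite mul0r subr0.
  have [k' [hk' h']] := step k hk; exists k'; split => //.
  rewrite -natr1 mulrDl mul1r; lra.
set X := (Fr (eps k0) + (sg + 1) / 2) / D.
have [k [hk h]] := iter (Num.trunc X).+1.
have tr := truncnS_gt X.
rewrite -(ltr_pM2r Dp) /X divfK in tr; last by apply: lt0r_neq0.
have := lb k hk; lra.
Qed.

Lemma Gr0 e : Gr e = Q *m e.
Proof. by rewrite /Gr gam0 addr0. Qed.

Lemma bil0l q (M : 'M[R]_q) v : bil M 0 v = 0.
Proof. by rewrite /bil trmx0 !mul0mx mxE. Qed.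

Lemma Fr0 e : Fr e = qform Q e / 2.
Proof. by rewrite /Fr gam0 bil0l addr0. Qed.

Lemma qx_mono k : (k0 <= k)%N -> qform Q (eps k.+1) <= qform Q (eps k).
Proof. by move=> hk; have := Fr_dec1 hk; rewrite !Fr0; lra. Qed.

Lemma qy_x k : (k0 <= k)%N -> qform Q (eta k.+1) <= qform Q (eps k).
Proof. by move=> hk; have := Fr_ls hk; rewrite !Fr0; lra. Qed.

Lemma qx_y k : (k0 <= k)%N -> qform Q (eps k) <= qform Q (eta k).
Proof.
move=> hk; have := Fr_grad (eta k); rewrite -(hx hk) !Fr0.
have : 0 <= t / 2 * sqn (Gr (eta k)).
  by apply: mulr_ge0; [apply: divr_ge0; [exact: ltW | by []] | exact: sqn_ge0].
lra.
Qed.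

Lemma qy_mono k : (k0 <= k)%N -> qform Q (eta k.+1) <= qform Q (eta k).
Proof. by move=> hk; apply: le_trans (qy_x hk) (qx_y hk). Qed.

Lemma qx_mono2 k k' : (k0 <= k)%N -> (k <= k')%N -> qform Q (eps k') <= qform Q (eps k).
Proof. by move=> hk hk'; have := Fr_mono hk hk'; rewrite !Fr0; lra. Qed.

Lemma qx_lim e : 0 < e -> exists N, (k0 <= N)%N /\ forall k, (N <= k)%N -> qform Q (eps k) < e.
Proof.
move=> e0; have [k' [hk' hs]] := hcl (divr_gt0 e0 L0) k0.
exists k'; split => // k hk; apply: le_lt_trans (qx_mono2 hk' hk) _.
apply: le_lt_trans (qL _) _.
by rewrite -(ltr_pM2l L0) mulrCA divff ?mulr1 ?lt0r_neq0 in hs.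
Qed.

Lemma qy_lim e : 0 < e -> exists N, forall k, (N <= k)%N -> qform Q (eta k) < e.
Proof.
move=> e0; have [N [hN HN]] := qx_lim e0; exists N.+1 => [[|k]] // hk.
apply: le_lt_trans (qy_x _) (HN _ hk); exact: leq_trans hN hk.
Qed.

Lemma lin_rate : exists c : R, 0 <= c /\ c < 1 /\ forall k, (k0 <= k)%N -> qform Q (eps k.+1) <= c * qform Q (eps k).
Proof.
have [a [a0 HKp]] : exists a : R, 0 < a /\ forall v, qform Q v <= a * sqn (Q *m v).
  have [Kp [Kp0 HKp]] := pinv_bound sQ.
  exists (Kp + 1); split; first lra.
  move=> v; apply: le_trans (HKp v) _; apply: ler_wpM2r; [exact: sqn_ge0 | lra].
have at0 : 0 < a + t by apply: addr_gt0.
exists (1 - t / (a + t)); split; last split.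
- by rewrite subr_ge0 ler_pdivrMr // mul1r lerDr ltW.
- rewrite ltrBlDr ltrDl; exact: divr_gt0.
move=> k hk.
have h1 := Fr_grad (eta k.+1); rewrite -(hx (leqW hk)) !Fr0 Gr0 in h1.
have h2 := HKp (eta k.+1).
have h3 := qy_x hk.
set q := qform Q (eta k.+1) in h1 h2 h3 *.
set s := sqn (Q *m eta k.+1) in h1 h2 *.
have q0 : 0 <= q := psdQ _.
have s0 : 0 <= s := sqn_ge0 _.
have h4 : q <= a * s by [].
have h5 : t / (a + t) * q <= t * s.
  rewrite mulrAC ler_pdivrMr //.
  have e1 : t * q <= t * (a * s) by apply: ler_wpM2l => //; exact: ltW.
  have e2 : 0 <= t * s * t by apply: mulr_ge0; [apply: mulr_ge0 => //; exact: ltW | exact: ltW].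
  have -> : t * s * (a + t) = t * (a * s) + t * s * t by ring.
  lra.
have : (1 - t / (a + t)) * q <= (1 - t / (a + t)) * qform Q (eps k).
  by apply: ler_wpM2l => //; rewrite subr_ge0 ler_pdivrMr // mul1r lerDr ltW.
lra.
Qed.

Lemma sqn_gt0 q (v : 'cV[R]_q) : v != 0 -> 0 < sqn v.
Proof.
move=> vn; rewrite lt_def sqn_ge0 andbT; apply/negP => /eqP /sqn_eq0 v0.
by rewrite v0 eqxx in vn.
Qed.

Lemma sqnZ q a (v : 'cV[R]_q) : sqn (a *: v) = a ^+ 2 * sqn v.
Proof. by rewrite !sqnE bilZl bilZr mulrA expr2. Qed.

Hypothesis spdQ : forall v, v != 0 -> 0 < qform Q v.
Variables (mm MM : R).
Hypothesis mm0 : 0 < mm.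
Hypothesis Hlb : forall k v, mm * sqn v <= qform (Hk k) v.
Hypothesis Hub : forall k v, qform (Hk k) v <= MM * sqn v.
Hypothesis sH : forall k, (Hk k)^T = Hk k.

Definition theta k := enorm ((invmx (Hk k) - Q) *m dr k) / enorm (dr k).

Lemma key_bound : exists C : R, 0 <= C /\ forall k, (k0 <= k)%N ->
  sqn (eps k.+1) <= C * (theta k ^+ 2 * sqn (eps k)).
Proof.
have [K2 [K20 HK2]] := mx_bound (invmx Q).
have [K3 [K30 HK3]] := mx_bound (1%:M - t *: Q).
set M1 := `|MM|.
have M10 : 0 <= M1 := normr_ge0 _.
have Hub' : forall k v, qform (Hk k) v <= M1 * sqn v.
  move=> k v; apply: le_trans (Hub k v) _; apply: ler_wpM2r; first exact: sqn_ge0.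
  exact: ler_norm.
have psdH : forall k v, 0 <= qform (Hk k) v.
  move=> k v; apply: le_trans (Hlb k v); apply: mulr_ge0; [exact: ltW | exact: sqn_ge0].
have Qunit : Q \in unitmx := spd_unit sQ spdQ.
have QiQ : invmx Q *m Q = 1%:M := mulVmx Qunit.
have L00 : 0 <= L := ltW L0.
exists (K3 * ((2 + 2 * (K2 * L * L)) * K2) * (M1 ^+ 2 * L ^+ 2)); split.
  apply: mulr_ge0; last by apply: mulr_ge0; apply: exprn_ge0.
  apply: mulr_ge0 => //; apply: mulr_ge0 => //.
  by apply: addr_ge0 => //; apply: mulr_ge0 => //; apply: mulr_ge0 => //; apply: mulr_ge0.
move=> k hk.
have hdE : dr k = - (Hk k *m (Q *m eps k)) by rewrite /dr Gr0.
have hq := q_ne0 hk.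
have qpos : 0 < qform Q (dr k) by rewrite lt_def hq psdQ.
have dne : dr k != 0.
  by apply: contra hq => /eqP ->; rewrite qformE /bil mulmx0 mxE.
have Hunit : Hk k \in unitmx.
  apply: spd_unit (sH k) _ => v vn.
  apply: lt_le_trans (Hlb k v); apply: mulr_gt0 => //; exact: sqn_gt0.
have BH : invmx (Hk k) *m Hk k = 1%:M := mulVmx Hunit.
set w := (invmx (Hk k) - Q) *m dr k.
set r := eps k + dr k.
have Qr : Q *m r = - w.
  have Bd : invmx (Hk k) *m dr k = - (Q *m eps k).
    by rewrite {1}hdE mulmxN !mulmxA BH mul1mx.
  by rewrite /w /r mulmxBl mulmxDr opprB Bd opprK addrC.
have hr : sqn r <= K2 * sqn w.
  have -> : r = invmx Q *m (Q *m r) by rewrite mulmxA QiQ mul1mx.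
  by rewrite Qr; apply: le_trans (HK2 _) _; rewrite sqnN.
have hal' : (al k - 1) * qform Q (dr k) = - bil Q r (dr k).
  have e1 : al k * qform Q (dr k) = - bil 1%:M (Gr (eps k)) (dr k).
    by rewrite (hal hk) mulrAC -mulrA divff // mulr1.
  have e2 : eps k = r - dr k by rewrite /r addrK.
  move: e1; rewrite Gr0 bil1Ml // {1}e2 bilBl -qformE => e1.
  rewrite mulrBl mul1r e1; ring.
have heta : eta k.+1 = r + (al k - 1) *: dr k.
  by rewrite (hy hk) /r; apply/matrixP => i j; rewrite !mxE; ring.
have hA : (al k - 1) ^+ 2 * qform Q (dr k) <= L * sqn r.
  apply: le_trans (qL r); have h := CS_form r (dr k) sQ psdQ.
  rewrite -[bil Q r (dr k)]opprK -hal' sqrrN exprMn in h.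
  rewrite -(ler_pM2r qpos).
  by move: h; rewrite [qform Q (dr k) ^+ 2]expr2 mulrA.
have hD : sqn (dr k) <= K2 * L * qform Q (dr k).
  have -> : sqn (dr k) = sqn (invmx Q *m (Q *m dr k)) by rewrite mulmxA QiQ mul1mx.
  apply: le_trans (HK2 _) _; rewrite -mulrA; apply: ler_wpM2l => //.
  by apply: sqnM_le => //; exact: qL.
have heta2 : sqn (eta k.+1) <= (2 + 2 * (K2 * L * L)) * sqn r.
  rewrite heta; apply: le_trans (sqnD2 _ _) _; rewrite sqnZ.
  have : (al k - 1) ^+ 2 * sqn (dr k) <= K2 * L * (L * sqn r).
    apply: le_trans (_ : (al k - 1) ^+ 2 * (K2 * L * qform Q (dr k)) <= _).
      by apply: ler_wpM2l => //; apply: sqr_ge0.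
    rewrite mulrCA; apply: ler_wpM2l => //; apply: mulr_ge0 => //.
  lra.
have hw : sqn w = theta k ^+ 2 * sqn (dr k).
  rewrite /theta /enorm exprMn exprVn !sqr_sqrtr ?sqn_ge0 //.
  by rewrite mulrAC -mulrA divff ?mulr1 // lt0r_neq0 // sqn_gt0.
have hd2 : sqn (dr k) <= M1 ^+ 2 * L ^+ 2 * sqn (eps k).
  rewrite hdE sqnN; apply: le_trans (sqnM_le2 _ (sH k) (psdH k) M10 (Hub' k)) _.
  by rewrite -mulrA; apply: ler_wpM2l; [apply: exprn_ge0 | apply: QL].
have heps : sqn (eps k.+1) <= K3 * sqn (eta k.+1).
  rewrite (hx (leqW hk)) Gr0.
  have -> : eta k.+1 - t *: (Q *m eta k.+1) = (1%:M - t *: Q) *m eta k.+1.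
    by rewrite mulmxBl mul1mx -scalemxAl.
  exact: HK3.
set A := 2 + 2 * (K2 * L * L).
have A0 : 0 <= A.
  by apply: addr_ge0 => //; apply: mulr_ge0 => //; apply: mulr_ge0 => //; apply: mulr_ge0.
have s1 := ler_wpM2l K30 heta2.
have s2 := ler_wpM2l K30 (ler_wpM2l A0 hr).
have s3 : sqn w <= theta k ^+ 2 * (M1 ^+ 2 * L ^+ 2 * sqn (eps k)).
  by rewrite hw; apply: ler_wpM2l => //; apply: sqr_ge0.
have s4 := ler_wpM2l K30 (ler_wpM2l A0 (ler_wpM2l K20 s3)).
apply: le_trans heps _; apply: le_trans s1 _; apply: le_trans s2 _; apply: le_trans s4 _.
by rewrite le_eqVlt; apply/orP; left; apply/eqP; ring.
Qed.

Lemma ratio_bound : exists C : R, 0 <= C /\ forall k, (k0 <= k)%N ->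
  enorm (eps k.+1) / enorm (eps k) <= C * theta k.
Proof.
have [C [C0 HC]] := key_bound.
exists (Num.sqrt C); split; first exact: sqrtr_ge0.
move=> k hk.
have th0 : 0 <= theta k by apply: divr_ge0; apply: sqrtr_ge0.
have h1 : enorm (eps k.+1) <= Num.sqrt C * theta k * enorm (eps k).
  have e1 : Num.sqrt C * theta k * Num.sqrt (sqn (eps k)) =
      Num.sqrt (C * (theta k ^+ 2 * sqn (eps k))).
    by rewrite sqrtrM // sqrtrM ?sqr_ge0 // sqrtr_sqr ger0_norm // mulrA.
  by rewrite /enorm e1; apply: ler_wsqrtr; apply: HC.
have [->|hn] := eqVneq (enorm (eps k)) 0.
  by rewrite invr0 mulr0; apply: mulr_ge0 => //; exact: sqrtr_ge0.
rewrite ler_pdivrMr //; rewrite lt_def hn; exact: sqrtr_ge0.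
Qed.

End Red.

Section G1.
Variable R : realType.
Variables (m n : nat) (A : 'M[R]_(m, n)) (b : 'cV[R]_m).

Lemma gradf_diff u v : gradf A b u - gradf A b v = (A^T *m A) *m (u - v).
Proof.
rewrite /gradf -mulmxBr -mulmxA; congr (_ *m _).
by rewrite mulmxBr; apply/matrixP => i j; rewrite !mxE; ring.
Qed.

Lemma bil1_mul (u : 'cV[R]_m) (v : 'cV[R]_n) : bil 1%:M u (A *m v) = bil 1%:M (A^T *m u) v.
Proof. by rewrite /bil !mulmx1 trmx_mul trmxK mulmxA. Qed.

Lemma qform_AtA v : qform (A^T *m A) v = sqn (A *m v).
Proof. by rewrite qformE sqnE /bil !mulmx1 trmx_mul !mulmxA. Qed.

Lemma fobj_expand u h : fobj A b (u + h) =
  fobj A b u + bil 1%:M (gradf A b u) h + sqn (A *m h) / 2.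
Proof.
rewrite /fobj mulmxDr.
have -> : A *m u + A *m h - b = (A *m u - b) + A *m h.
  by rewrite addrAC.
rewrite /gradf -bil1_mul.
move: (A *m u - b) (A *m h) => c w.
rewrite !sqnE !(bilDl, bilDr) (bil_sym w c) ?trmx1 //; by field.
Qed.

End G1.

Section G2.
Variable R : realType.
Variable n : nat.

Lemma enorm_sq (v : 'cV[R]_n) : enorm v ^+ 2 = sqn v.
Proof. by rewrite /enorm sqr_sqrtr // sqn_ge0. Qed.

Lemma entry_le (v : 'cV[R]_n) i : `|v i 0| <= enorm v.
Proof.
rewrite -(ler_pXn2r (n:=2)) ?nnegrE ?normr_ge0 ?sqrtr_ge0 // enorm_sq real_normK ?num_real //.
rewrite /sqn (bigD1 i) //= lerDl; apply: sumr_ge0 => j _; apply: sqr_ge0.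
Qed.

Lemma subvB (S : {set 'I_n}) (u v : 'cV[R]_n) : subv S (u - v) = subv S u - subv S v.
Proof. by rewrite !subvE mulmxBr. Qed.

Lemma subvZ (S : {set 'I_n}) a (u : 'cV[R]_n) : subv S (a *: u) = a *: subv S u.
Proof. by rewrite !subvE scalemxAr. Qed.

End G2.

Section G3.
Variable R : realType.
Variables (m n : nat) (A : 'M[R]_(m, n)) (b : 'cV[R]_m).

Definition quad (L mu : R) (y z : 'cV[R]_n) :=
  L / 2 * sqn (z - y + L^-1 *: gradf A b y) + mu / 2 * sqn (z - y).

Lemma quad_id (L mu : R) (y z : 'cV[R]_n) (I : {set 'I_n}) :
  0 < L -> 0 <= mu -> (forall i, i \in I -> z i 0 = 0) ->
  quad L mu y z = quad L mu y (projC I (y - (L + mu)^-1 *: gradf A b y))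
    + (L + mu) / 2 * sqn (z - projC I (y - (L + mu)^-1 *: gradf A b y)).
Proof.
move=> L0 mu0 hz.
have Ln : L != 0 by apply: lt0r_neq0.
have Lmn : L + mu != 0 by apply: lt0r_neq0; apply: ltr_wpDr.
rewrite /quad /sqn !mulr_sumr -!big_split /=; apply: eq_bigr => i _.
rewrite !mxE; case: ifP => hi.
  by rewrite hz //; ring.
by field; rewrite Lmn Ln.
Qed.

Lemma xstep (L lam mu : R) (y x : 'cV[R]_n) :
  0 < L -> 0 <= mu -> 0 <= lam ->
  (forall z, iht_sub A b L lam mu y x <= iht_sub A b L lam mu y z) ->
  x = projC (Iz x) (y - (L + mu)^-1 *: gradf A b y).
Proof.
move=> L0 mu0 lam0 H.
set zs := projC (Iz x) (y - (L + mu)^-1 *: gradf A b y).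
have hI : forall z, iht_sub A b L lam mu y z = lam * (l0 z)%:R + quad L mu y z.
  by move=> z; rewrite /iht_sub /quad addrA.
have hx : forall i, i \in Iz x -> x i 0 = 0 by move=> i; rewrite inE => /eqP.
have hl0 : (l0 zs <= l0 x)%N.
  apply: subset_leq_card; apply/fintype.subsetP => i; rewrite !inE; apply: contraNN.
  move=> /eqP hxi; rewrite mxE; have -> : i \in Iz x by rewrite inE hxi.
  by [].
have h1 := H zs; rewrite !hI (@quad_id L mu y x (Iz x) L0 mu0 hx) -/zs in h1.
have h2 : lam * (l0 zs)%:R <= lam * (l0 x)%:R by apply: ler_wpM2l => //; rewrite ler_nat.
have Lm : 0 < (L + mu) / 2 by apply: divr_gt0 => //; apply: ltr_wpDr.
have h3 : (L + mu) / 2 * sqn (x - zs) <= 0 by lra.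
have h4 : sqn (x - zs) = 0.
  apply/eqP; rewrite eq_le sqn_ge0 andbT.
  by rewrite -(ler_pM2l Lm) mulr0.
by apply/eqP; rewrite -subr_eq0; apply/eqP; apply: sqn_eq0.
Qed.

End G3.

Section G4.
Variable R : realType.

Lemma fin_pos_lb (I : finType) (F : I -> R) : (forall i, 0 < F i) ->
  exists2 d, 0 < d & forall i, d <= F i.
Proof.
move=> hF.
have : forall s : seq I, exists2 d, 0 < d & forall i, i \in s -> d <= F i.
  elim => [|a s [d d0 hd]]; first by exists 1.
  exists (Order.min d (F a)); first by rewrite lt_min d0 hF.
  move=> i; rewrite inE => /orP [/eqP ->|/hd h].
    by rewrite ge_min lexx orbT.
  by rewrite ge_min h.
move=> /(_ (enum I)) [d d0 hd]; exists d => // i; apply: hd; by rewrite mem_enum.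
Qed.

Variables (m n : nat) (A : 'M[R]_(m, n)) (b : 'cV[R]_m).

Lemma locmin (y : 'cV[R]_n) (S : {set 'I_n}) lam :
  0 < lam -> S = [set i | y i 0 != 0] ->
  (forall i, i \in S -> gradf A b y i 0 = 0) ->
  local_min (Hobj A b lam) y.
Proof.
move=> lam0 hS hg.
set g := gradf A b y.
have hF : forall i, 0 < (fun i => if y i 0 != 0 then `|y i 0| else 1) i.
  by move=> i /=; case: ifP => // hy; rewrite normr_gt0.
have [d d0 hd] := fin_pos_lb hF.
have eg0 : 0 <= enorm g by apply: sqrtr_ge0.
have eg1 : 0 < enorm g + 1 by lra.
set del := Order.min (lam / (enorm g + 1)) d.
have del0 : 0 < del by rewrite lt_min d0 andbT divr_gt0.
exists del => // z hz.
have hzS : forall i, i \in S -> z i 0 != 0.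
  move=> i; rewrite hS inE => yi; apply/negP => /eqP zi.
  have h1 := entry_le (z - y) i; rewrite !mxE zi add0r normrN in h1.
  have h2 := hd i; rewrite /= yi in h2.
  have : del <= d by rewrite ge_min lexx orbT.
  lra.
have hyS : forall i, i \notin S -> y i 0 = 0.
  by move=> i; rewrite hS inE negbK => /eqP.
have fe := fobj_expand A b y (z - y); rewrite addrC subrK in fe.
have sA := sqn_ge0 (A *m (z - y)).
have hl0y : l0 y = #|S| by rewrite hS.
rewrite /Hobj.
case: (boolP [exists i, (i \notin S) && (z i 0 != 0)]) => [/existsP [i0 /andP [i0S zi0]]|hne].
- have hl : (#|S|.+1 <= l0 z)%N.
    have -> : #|S|.+1 = #|i0 |: S| by rewrite cardsU1 i0S.
    apply: subset_leq_card; apply/fintype.subsetP => i; rewrite !inE.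
    case/orP => [/eqP -> //|iS]; exact: hzS.
  have hcs : - (enorm g * enorm (z - y)) <= bil 1%:M g (z - y).
    have h := CS g (z - y); rewrite -!enorm_sq -exprMn in h.
    have : `|bil 1%:M g (z - y)| <= enorm g * enorm (z - y).
      rewrite -ler_sqr ?nnegrE ?normr_ge0 //; last by apply: mulr_ge0 => //; apply: sqrtr_ge0.
      by rewrite real_normK // num_real.
    rewrite ler_norml => /andP [] //.
  have hlt : enorm g * enorm (z - y) < lam.
    have h1 : enorm (z - y) < lam / (enorm g + 1).
      by apply: lt_le_trans hz _; rewrite ge_min lexx.
    apply: le_lt_trans (_ : enorm g * (lam / (enorm g + 1)) < lam).
      by apply: ler_wpM2l => //; apply: ltW.
    by rewrite mulrA ltr_pdivrMr // mulrDr mulr1 mulrC ltrDl.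
  have : lam * (l0 y)%:R + lam <= lam * (l0 z)%:R.
    rewrite hl0y -[X in _ + X]mulr1 -mulrDr natr1; apply: ler_wpM2l; [exact: ltW | by rewrite ler_nat].
  lra.
- have hz0 : forall i, i \notin S -> z i 0 = 0.
    move=> i iS; apply/eqP; move: hne; rewrite negb_exists => /forallP /(_ i).
    by rewrite iS /= negbK.
  have hb : bil 1%:M g (z - y) = 0.
    rewrite bil1E big1 // => i _.
    case: (boolP (i \in S)) => iS.
      by have := hg i iS; rewrite -/g => ->; rewrite mul0r.
    have -> : (z - y) i 0 = 0 by rewrite !mxE hz0 // hyS // subrr.
    by rewrite mulr0.
  have hl : l0 z = #|S|.
    rewrite /l0; apply: eq_card => i; rewrite inE.
    case: (boolP (i \in S)) => iS; first by rewrite hzS.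
    by rewrite hz0 // eqxx.
  rewrite hl hl0y; lra.
Qed.

End G4.

Unset Implicit Arguments.
Local Open Scope ring_scope.
Local Open Scope classical_set_scope.

Lemma cvg0_of (R : realType) (u : nat -> R) :
  (forall e, 0 < e -> exists N, forall k, (N <= k)%N -> `|u k| < e) -> u @ \oo --> (0:R).
Proof.
move=> H; apply/cvgr0Pnorm_lt => e e0; have [N HN] := H e e0.
by exists N => // k /= hk; apply: HN.
Qed.

Lemma of_cvg0 (R : realType) (u : nat -> R) : u @ \oo --> (0:R) ->
  (forall e, 0 < e -> exists N, forall k, (N <= k)%N -> `|u k| < e).
Proof.
move=> /cvgr0Pnorm_lt H e e0; have [N _ HN] := H e e0.
by exists N => k hk; apply: HN.
Qed.

Lemma cvg_dom (R : realType) (u v : nat -> R) (C : R) (k0 : nat) : 0 <= C ->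
  (forall k, (k0 <= k)%N -> 0 <= u k /\ u k <= C * v k) ->
  v @ \oo --> (0:R) -> u @ \oo --> (0:R).
Proof.
move=> C0 H /of_cvg0 hv; apply: cvg0_of => e e0.
have C1 : 0 < C + 1 by lra.
have [N HN] := hv _ (divr_gt0 e0 C1).
exists (maxn N k0) => k hk.
have [h1 h2] := H k (leq_trans (leq_maxr _ _) hk).
have h3 := HN k (leq_trans (leq_maxl _ _) hk).
rewrite ger0_norm //; apply: le_lt_trans h2 _.
have h4 : v k <= `|v k| := ler_norm _.
have h5 : C * v k <= C * `|v k| by apply: ler_wpM2l.
apply: le_lt_trans h5 _.
have h6 : C * `|v k| <= (C + 1) * `|v k| by apply: ler_wpM2r; [exact: normr_ge0 | lra].
apply: le_lt_trans h6 _.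
by rewrite mulrC -ltr_pdivlMr.
Qed.

Theorem theorem2 (R : realType) (m n : nat) (A : 'M[R]_(m, n)) (b : 'cV[R]_m)
  (L lam mu : R) (Hs : nat -> 'M[R]_n) (alpha : nat -> R)
  (x y : nat -> 'cV[R]_n) (xs : 'cV[R]_n) (k0 : nat) :
  0 < L ->
  (forall u v, enorm (gradf A b u - gradf A b v) <= L * enorm (u - v)) ->
  0 < lam -> 0 < mu ->
  vmepiht A b L lam mu Hs alpha x y ->
  cluster_pt x xs ->
  (forall k, (k0 <= k)%N -> Iz (y k) = Iz (x k) /\ Iz (x k) = Iz xs) ->
  (forall k, (k0 <= k)%N -> 0 < alpha k) ->
  let AtA := A^T *m A in
  let S := Sset xs in
  let Q := psub S AtA in
  let Hstar := fun k => psub S (Hs k) in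
  let dstar := fun k => - (Hstar k *m subv S (gradf A b (x k))) in
  (* (1) *)
  ((forall k, (k0 <= k)%N -> qform AtA (x k.+1 - xs) <= qform AtA (x k - xs))
   /\ (fun k => qform AtA (x k - xs)) @ \oo --> (0 : R)
   /\ (forall k, (k0 <= k)%N -> qform AtA (y k.+1 - xs) <= qform AtA (y k - xs))
   /\ (fun k => qform AtA (y k - xs)) @ \oo --> (0 : R)
   /\ (forall k, (k0 <= k)%N -> qform AtA (y k - xs) = 0 ->
         local_min (Hobj A b lam) (y k)))
  /\
  (* (2) *)
  ((exists mm MM : R, 0 < mm /\ mm <= MM /\
      forall k (v : 'cV[R]_n), mm * sqn v <= qform (Hs k) v /\ qform (Hs k) v <= MM * sqn v) ->
   exists c : R, 0 <= c /\ c < 1 /\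
     forall k, (k0 <= k)%N -> qform AtA (x k.+1 - xs) <= c * qform AtA (x k - xs))
  /\
  (* (3) *)
  ((exists mm MM : R, 0 < mm /\ mm <= MM /\
      forall k (v : 'cV[R]_n), mm * sqn v <= qform (Hs k) v /\ qform (Hs k) v <= MM * sqn v) ->
   spd Q ->
   (fun k => enorm ((invmx (Hstar k) - Q) *m dstar k) / enorm (dstar k)) @ \oo --> (0 : R) ->
   (fun k => enorm (x k.+1 - xs) / enorm (x k - xs)) @ \oo --> (0 : R)).
Proof.
move=> L0 Lip lam0 mu0 hv hcl hI hpos AtA S Q Hstar dstar.
have sAtA : AtA^T = AtA by rewrite /AtA trmx_mul trmxK.
have SC : ~: S = Iz xs by rewrite /S /Sset finset.setCK.
have hSx : forall k, (k0 <= k)%N -> Sset (x k) = S.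
  by move=> k hk; rewrite /S /Sset (hI k hk).2.
have suppI : forall v : 'cV[R]_n, Iz v = Iz xs -> supp S v.
  move=> v hv' i iS; have : i \in Iz v by rewrite hv' -SC finset.in_setC.
  by rewrite inE => /eqP.
have suppD : forall v : 'cV[R]_n, Iz v = Iz xs -> supp S (v - xs).
  move=> v hv' i iS; rewrite !mxE (suppI v hv' i iS) (suppI xs erefl i iS) subrr //.
have hxI : forall k, (k0 <= k)%N -> Iz (x k) = Iz xs by move=> k hk; exact: (hI k hk).2.
have hyI : forall k, (k0 <= k)%N -> Iz (y k) = Iz xs.
  by move=> k hk; rewrite (hI k hk).1 (hI k hk).2.
set gam := subv S (gradf A b xs).
set eps := fun k => subv S (x k - xs).
set eta := fun k => subv S (y k - xs).
set t := (L + mu)^-1.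
have Gsub : forall z, supp S (z - xs) ->
    subv S (gradf A b z) = Gr Q gam (subv S (z - xs)).
  move=> z sz.
  have -> : gradf A b z = gradf A b xs + AtA *m (z - xs).
    by rewrite /AtA -(gradf_diff A b) addrC subrK.
  rewrite /Gr subvE mulmxDr -subvE addrC; congr (_ + _).
  by rewrite !subvE -{1}(liftPmK sz) /Q psubE !mulmxA.
have psub_sym : forall M : 'M[R]_n, M^T = M -> (psub S M)^T = psub S M.
  by move=> M sM; rewrite psubE !trmx_mul trmxK sM mulmxA.
have sQ : Q^T = Q by apply: psub_sym.
have psdQ : forall w, 0 <= qform Q w.
  by move=> w; rewrite /Q -qform_lift /AtA qform_AtA; apply: sqn_ge0.
have QL : forall w, sqn (Q *m w) <= L ^+ 2 * sqn w.
  move=> w; rewrite /Q psubE -!mulmxA -subvE.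
  apply: le_trans (sqn_subv _ _) _.
  have h := Lip ((@Pm R n S)^T *m w) 0.
  rewrite gradf_diff subr0 -mulmxA in h.
  rewrite -(sqn_lift (S := S) w) -!enorm_sq -exprMn.
  rewrite ler_sqr ?nnegrE //; first exact: sqrtr_ge0.
  by apply: mulr_ge0; [exact: ltW | exact: sqrtr_ge0].
have t0 : 0 < t by rewrite /t invr_gt0 addr_gt0.
have tL : t * L <= 1.
  by rewrite /t mulrC ler_pdivrMr ?addr_gt0 // mul1r lerDl ltW.
have hx : forall k, (k0 <= k)%N -> eps k = eta k - t *: Gr Q gam (eta k).
  move=> k hk.
  have hxk := xstep L0 (ltW mu0) (ltW lam0) (hv k).1.
  rewrite /eps /eta /= -(Gsub (y k)); last exact: suppD (hyI k hk).
  rewrite hxk (hxI k hk) -SC !subvB [subv S (projC _ _)]subvE Pm_projC -subvE.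
  rewrite subvB subvZ -/t.
  by apply/matrixP => i j; rewrite !mxE; ring.
have hgx : forall k, (k0 <= k)%N -> Gr Q gam (eps k) = subv S (gradf A b (x k)).
  by move=> k hk; rewrite (Gsub (x k)) //; exact: suppD (hxI k hk).
have hy : forall k, (k0 <= k)%N -> eta k.+1 = eps k + alpha k *: dr Q gam eps Hstar k.
  move=> k hk.
  have hyk := (hv k).2.2.2.2.
  have bd := (hv k).2.2.1; rewrite (hSx k hk) in bd.
  rewrite /eta /= hyk (hxI k hk) -SC /dr (hgx k hk) /Hstar -(block_subv _ bd).
  rewrite !subvB [subv S (projC _ _)]subvE Pm_projC -subvE subvB subvZ /eps /=.
  rewrite subvB.
  by apply/matrixP => i j; rewrite !mxE; ring.
have hal : forall k, (k0 <= k)%N -> alpha k =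
    - bil 1%:M (Gr Q gam (eps k)) (dr Q gam eps Hstar k) / qform Q (dr Q gam eps Hstar k).
  move=> k hk.
  have ha := (hv k).2.2.2.1.
  have hp := hpos k hk.
  move: ha hp; rewrite /alpha_rule (hSx k hk) /=.
  case: ifP => _ ha hp; first by rewrite ha ltxx in hp.
  by rewrite ha /dr (hgx k hk) /bil mulmx1.
have hcl' : forall del, 0 < del -> forall N, exists k, (N <= k)%N /\ sqn (eps k) < del.
  move=> del del0 N.
  have sq0 : 0 < Num.sqrt del by rewrite sqrtr_gt0.
  have [k [hk hlt]] := hcl (Num.sqrt del) sq0 N.
  exists k; split => //; apply: le_lt_trans (sqn_subv _ _) _.
  by rewrite -ltr_sqrt.
pose red := (sQ, psdQ, L0, QL, t0, tL).
have Hg0 := gam0 sQ psdQ L0 QL t0 tL hx hy hal hpos hcl'.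
have qxE : forall k, (k0 <= k)%N -> qform AtA (x k - xs) = qform Q (eps k).
  by move=> k hk; rewrite /Q /eps /= -qform_supp //; exact: suppD (hxI k hk).
have qyE : forall k, (k0 <= k)%N -> qform AtA (y k - xs) = qform Q (eta k).
  by move=> k hk; rewrite /Q /eta /= -qform_supp //; exact: suppD (hyI k hk).
have eS : forall k, (k0 <= k)%N -> enorm (x k - xs) = enorm (eps k).
  by move=> k hk; rewrite /enorm /eps /= -sqn_supp //; exact: suppD (hxI k hk).
split; [split; [|split; [|split; [|split]]] | split].
- move=> k hk; rewrite (qxE k hk) (qxE _ (leqW hk)).
  exact: (qx_mono sQ psdQ L0 QL t0 tL hx hy hal hpos hcl' hk).
- apply: cvg0_of => e e0.
  have [N [hN HN]] := qx_lim sQ psdQ L0 QL t0 tL hx hy hal hpos hcl' e0.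
  exists N => k hk; rewrite /= (qxE k (leq_trans hN hk)) ger0_norm //; exact: HN.
- move=> k hk; rewrite (qyE k hk) (qyE _ (leqW hk)).
  exact: (qy_mono sQ psdQ L0 QL t0 tL hx hy hal hpos hcl' hk).
- apply: cvg0_of => e e0.
  have [N HN] := qy_lim sQ psdQ L0 QL t0 tL hx hy hal hpos hcl' e0.
  exists (maxn N k0) => k hk.
  rewrite /= (qyE k (leq_trans (leq_maxr _ _) hk)) ger0_norm //.
  exact: HN (leq_trans (leq_maxl _ _) hk).
- move=> k hk hq0.
  have hA : A *m (y k - xs) = 0 by apply: sqn_eq0; rewrite -qform_AtA.
  have hg : gradf A b (y k) = gradf A b xs.
    apply/eqP; rewrite -subr_eq0; apply/eqP.
    by rewrite gradf_diff -mulmxA hA mulmx0.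
  apply: (locmin (S := S) lam0).
    by apply/finset.setP => i; rewrite inE /S /Sset -(hyI k hk) !inE.
  move=> i iS; rewrite hg.
  have := PmTPm (R := R) S (gradf A b xs); rewrite -subvE -/gam Hg0 mulmx0.
  move=> /(congr1 (fun M : 'M[R]_(n, 1) => M i 0)); rewrite !mxE finset.in_setC iS /=.
  by move=> <-.
- move=> _.
  have [c [c0 [c1 Hc]]] := lin_rate sQ psdQ L0 QL t0 tL hx hy hal hpos hcl'.
  exists c; split => //; split => // k hk.
  by rewrite (qxE k hk) (qxE _ (leqW hk)); exact: Hc.
- move=> [mm [MM [mm0 [_ Hb]]]] [_ spdQ] hDM.
  have Hlb : forall k v, mm * sqn v <= qform (Hstar k) v.
    move=> k v; rewrite /Hstar -qform_lift -(sqn_lift (S := S) v); exact: (Hb k _).1.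
  have Hub : forall k v, qform (Hstar k) v <= MM * sqn v.
    move=> k v; rewrite /Hstar -qform_lift -(sqn_lift (S := S) v); exact: (Hb k _).2.
  have sH : forall k, (Hstar k)^T = Hstar k.
    by move=> k; apply: psub_sym; exact: (hv k).2.1.1.
  have [C [C0 HC]] :=
    ratio_bound sQ psdQ L0 QL t0 tL hx hy hal hpos hcl' spdQ mm0 Hlb Hub sH.
  apply: (@cvg_dom R _ _ C k0 C0 _ hDM) => k hk; split.
    by apply: divr_ge0; apply: sqrtr_ge0.
  rewrite (eS k hk) (eS _ (leqW hk)).
  apply: le_trans (HC k hk) _.
  by rewrite /theta /dr (hgx k hk).
Qed.
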